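(* With $h$ as defined in the context, $h$ is smooth (infinitely differentiable) on $(-2,\infty)$.
   Context: Let $u_n=(-1)^{s_2(n)}$, where $s_2(n)$ is the sum of the binary digits of the non-negative integer $n$ (Thue–Morse sequence with values $\pm1$). For real $x>-2$ define $h(x)=\prod_{n=1}^\infty\left(\frac{2n+x}{2n+1+x}\right)^{u_n}$ (limit of partial products; it converges and is positive). *)

(* Defs.v *)
From Stdlib Require Import Reals ZArith.
From Coquelicot Require Import Coquelicot.
Open Scope R_scope.

Fixpoint pos_digit_sum (p : positive) : nat :=
  match p with
  | xH => 1%nat
  | xO q => pos_digit_sum q
  | xI q => S (pos_digit_sum q)
  end.

Definition s2 (n : nat) : nat :=
  match N.of_nat n with
  | N0 => 0%nat
  | Npos p => pos_digit_sum p
  end.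

Definition u (n : nat) : Z := ((-1) ^ Z.of_nat (s2 n))%Z.

Definition factor (n : nat) (x : R) : R :=
  powerRZ ((2 * INR n + x) / (2 * INR n + 1 + x)) (u n).

Fixpoint partial_prod (N : nat) (x : R) : R :=
  match N with
  | O => 1
  | S M => partial_prod M x * factor (S M) x
  end.

Definition h (x : R) : R := Lim_seq (fun N => partial_prod N x).

(* Main.v *)
Require Import Defs.
From Stdlib Require Import Reals ZArith Lia Lra.
From Coquelicot Require Import Coquelicot.
Open Scope R_scope.

Definition Sm (D : R -> Prop) (f : R -> R) := forall k x, D x -> ex_derive_n f k x.

Lemma isd_eq (f : R -> R) (x l l' : R) : is_derive f x l -> l = l' -> is_derive f x l'.
Proof. intros H ->; exact H. Qed.

Lemma isd_mult (f g : R -> R) (x df dg : R) : is_derive f x df -> is_derive g x dg ->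
  is_derive (fun t => f t * g t) x (df * g x + f x * dg).
Proof. intros H1 H2. apply (is_derive_mult f g x df dg H1 H2). intros; apply Rmult_comm. Qed.

Lemma isd_plus (f g : R -> R) (x df dg : R) : is_derive f x df -> is_derive g x dg ->
  is_derive (fun t => f t + g t) x (df + dg).
Proof. intros H1 H2. apply (is_derive_plus f g x df dg H1 H2). Qed.

Lemma isd_minus (f g : R -> R) (x df dg : R) : is_derive f x df -> is_derive g x dg ->
  is_derive (fun t => f t - g t) x (df - dg).
Proof. intros H1 H2. apply (is_derive_minus f g x df dg H1 H2). Qed.

Lemma loc_eq (D : R -> Prop) (f g : R -> R) (x : R) : open D -> D x -> (forall y, D y -> f y = g y) ->
  locally x (fun t => f t = g t).
Proof. intros HD Hx H. apply filter_imp with D; [exact H | apply HD, Hx]. Qed.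

Lemma derive_n_shift (D : R -> Prop) F G : open D ->
  (forall y, D y -> is_derive F y (G y)) ->
  forall i y, D y -> Derive_n F (S i) y = Derive_n G i y.
Proof.
  intros HD HF i. induction i as [|i IH]; intros y Hy.
  - simpl. apply is_derive_unique. apply HF, Hy.
  - change (Derive (Derive_n F (S i)) y = Derive (Derive_n G i) y).
    apply Derive_ext_loc. apply (loc_eq D); auto.
Qed.

Lemma ex_shift (D : R -> Prop) F G : open D ->
  (forall y, D y -> is_derive F y (G y)) ->
  forall j x, D x -> ex_derive_n G j x -> ex_derive_n F (S j) x.
Proof.
  intros HD HF j x Hx HG. destruct j as [|j].
  - simpl. exists (G x). apply HF, Hx.
  - change (ex_derive (Derive_n F (S j)) x).
    apply ex_derive_ext_loc with (Derive_n G j).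
    + apply (loc_eq D); auto. intros y Hy. symmetry. apply (derive_n_shift D F G); auto.
    + exact HG.
Qed.

Lemma family (D : R -> Prop) (psi : nat -> R -> R) : open D ->
  (forall k y, D y -> is_derive (psi k) y (psi (S k) y)) ->
  forall k y, D y -> Derive_n (psi 0%nat) k y = psi k y /\ ex_derive_n (psi 0%nat) k y.
Proof.
  intros HD Hp k. induction k as [|k IH]; intros y Hy.
  - split; reflexivity.
  - split.
    + change (Derive (Derive_n (psi 0%nat) k) y = psi (S k) y).
      rewrite (Derive_ext_loc _ (psi k)).
      * apply is_derive_unique, Hp, Hy.
      * apply (loc_eq D); auto. intros; apply IH; auto.
    + change (ex_derive (Derive_n (psi 0%nat) k) y).
      apply ex_derive_ext_loc with (psi k).
      * apply (loc_eq D); auto. intros; symmetry; apply IH; auto.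
      * exists (psi (S k) y). apply Hp, Hy.
Qed.

Lemma Sm_derive D f : Sm D f -> Sm D (Derive f).
Proof.
  intros H k x Hx. destruct k as [|k]. exact I.
  change (ex_derive (Derive_n (Derive f) k) x).
  apply ex_derive_ext with (Derive_n f (S k)).
  - intros t. replace (S k) with (k + 1)%nat by lia. rewrite <- (Derive_n_comp f k 1). reflexivity.
  - apply (H (S (S k)) x Hx).
Qed.

Lemma Sm_ex D f x : Sm D f -> D x -> ex_derive f x.
Proof. intros H Hx. apply (H 1%nat x Hx). Qed.

Lemma Sm_le D f x n : open D -> Sm D f -> D x ->
  locally x (fun y => forall k, (k <= n)%nat -> ex_derive_n f k y).
Proof. intros HD H Hx. apply filter_imp with D. intros; apply H; auto. apply HD, Hx. Qed.

Lemma Sm_plus D f g : open D -> Sm D f -> Sm D g -> Sm D (fun t => f t + g t).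
Proof. intros HD Hf Hg k x Hx. apply ex_derive_n_plus; apply (Sm_le D); auto. Qed.

Lemma Sm_minus D f g : open D -> Sm D f -> Sm D g -> Sm D (fun t => f t - g t).
Proof. intros HD Hf Hg k x Hx. apply ex_derive_n_minus; apply (Sm_le D); auto. Qed.

Lemma Sm_const D c : Sm D (fun _ => c).
Proof. intros k x _. apply ex_derive_n_const. Qed.

Lemma Sm_mult D f g : open D -> Sm D f -> Sm D g -> Sm D (fun t => f t * g t).
Proof.
  intros HD.
  assert (Hm : forall n k, (k <= n)%nat -> forall f g, Sm D f -> Sm D g ->
     forall x, D x -> ex_derive_n (fun t => f t * g t) k x).
  { induction n as [|n IH]; intros k Hk f0 g0 Hf Hg x Hx.
    - assert (k = 0%nat) by lia. subst. exact I.
    - destruct k as [|j]. exact I.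
      apply (ex_shift D _ (fun t => Derive f0 t * g0 t + f0 t * Derive g0 t)); auto.
      + intros y Hy. apply isd_mult; apply Derive_correct; apply (Sm_ex D); auto.
      + apply ex_derive_n_plus.
        * apply filter_imp with D; [|apply HD, Hx]. intros y Hy i Hi.
          apply (IH i); auto. lia. apply Sm_derive; auto.
        * apply filter_imp with D; [|apply HD, Hx]. intros y Hy i Hi.
          apply (IH i); auto. lia. apply Sm_derive; auto. }
  intros Hf Hg k x Hx. apply (Hm k k (le_n k)); auto.
Qed.

Lemma Sm_exp D f : open D -> Sm D f -> Sm D (fun t => exp (f t)).
Proof.
  intros HD.
  assert (He : forall k f g, Sm D f -> Sm D g ->
     forall x, D x -> ex_derive_n (fun t => g t * exp (f t)) k x).
  { induction k as [|k IH]; intros f0 g0 Hf Hg x Hx. exact I.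
    apply (ex_shift D _ (fun t => (Derive g0 t + g0 t * Derive f0 t) * exp (f0 t))); auto.
    - intros y Hy. eapply isd_eq. apply isd_mult.
      + apply Derive_correct; apply (Sm_ex D); auto.
      + apply (is_derive_comp exp f0). apply is_derive_exp. apply Derive_correct; apply (Sm_ex D); auto.
      + simpl. change (scal (Derive f0 y) (exp (f0 y))) with (Derive f0 y * exp (f0 y)). ring.
    - apply IH; auto. apply Sm_plus; auto. apply Sm_derive; auto. apply Sm_mult; auto. apply Sm_derive; auto. }
  intros Hf k x Hx. apply ex_derive_n_ext with (fun t => 1 * exp (f t)).
  intros; ring. apply He; auto. apply Sm_const.
Qed.

Lemma series_smooth (D : R -> Prop) (fn : nat -> R -> R) : open D -> is_connected D ->
  (forall n, Sm D (fn n)) ->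
  (forall k, CVU_dom (fun n x => Derive_n (fn n) k x) D) ->
  Sm D (fun y => Lim_seq (fun n => fn n y)).
Proof.
  intros HD HC Hs Hcv.
  set (psi := fun k y => real (Lim_seq (fun n => Derive_n (fn n) k y))).
  assert (Hp : forall k y, D y -> is_derive (psi k) y (psi (S k) y)).
  { intros k y Hy. unfold psi.
    apply (CVU_Derive (fun n => Derive_n (fn n) k) D HD HC (Hcv k)); auto.
    - intros n x Hx. apply (Hs n (S k) x Hx).
    - intros n x Hx. apply continuity_pt_filterlim. apply (@ex_derive_continuous R_AbsRing R_NormedModule).
      apply (Hs n (S (S k)) x Hx).
    - apply (Hcv (S k)). }
  intros k x Hx. apply (family D psi HD Hp k x Hx).
Qed.

Lemma s2_odd m : s2 (S (2 * m)) = S (s2 (2 * m)).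
Proof.
  unfold s2.
  assert (H1 : N.of_nat (2 * m) = N.double (N.of_nat m)) by (rewrite N.double_spec; lia).
  assert (H2 : N.of_nat (S (2 * m)) = N.succ_double (N.of_nat m)) by (rewrite N.succ_double_spec; lia).
  rewrite H1, H2. destruct (N.of_nat m); reflexivity.
Qed.

Lemma pm1 k : ((-1) ^ Z.of_nat k = 1 \/ (-1) ^ Z.of_nat k = -1)%Z.
Proof.
  induction k as [|k IH]. left; reflexivity.
  rewrite Nat2Z.inj_succ, Z.pow_succ_r by lia. destruct IH as [-> | ->]; [right|left]; reflexivity.
Qed.

Lemma u_pm n : u n = 1%Z \/ u n = (-1)%Z.
Proof. apply pm1. Qed.

Lemma u_odd m : u (S (2 * m)) = (- u (2 * m))%Z.
Proof. unfold u. rewrite s2_odd, Nat2Z.inj_succ, Z.pow_succ_r by lia. ring. Qed.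

Lemma u_1 : u 1 = (-1)%Z.
Proof. reflexivity. Qed.

Definition Psi (k : nat) (t : R) : R :=
  match k with O => ln t | S k' => (-1)^k' * INR (fact k') / t^(S k') end.

Lemma Psi_der k t : 0 < t -> is_derive (Psi k) t (Psi (S k) t).
Proof.
  intros Ht. destruct k as [|k].
  - eapply isd_eq. apply is_derive_ln, Ht. simpl. field. lra.
  - unfold Psi. auto_derive. change (t * t ^ k) with (t ^ (S k)). apply pow_nonzero; lra.
    change (fact (S k)) with (S k * fact k)%nat. rewrite mult_INR, S_INR.
    simpl. replace (match k with 0%nat => 1 | S _ => INR k + 1 end) with (INR k + 1) by (destruct k; simpl; ring).
    assert (t ^ k <> 0) by (apply pow_nonzero; lra). field. split; auto; lra.
Qed.

Lemma Psi_der_c k c x : 0 < c + x -> is_derive (fun y => Psi k (c + y)) x (Psi (S k) (c + x)).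
Proof.
  intros H. eapply isd_eq. apply (is_derive_comp (Psi k) (fun y => c + y)).
  apply Psi_der, H. auto_derive. exact I. reflexivity.
  unfold scal; simpl; unfold mult; simpl. ring.
Qed.

Definition e (j : nat) : R := IZR (u (2 * S j)).

Definition B (k j : nat) (x : R) : R :=
  e j * (Psi k (4 * INR (S j) + x) - Psi k (4 * INR (S j) + 1 + x)
         - Psi k (4 * INR (S j) + 2 + x) + Psi k (4 * INR (S j) + 3 + x)).

Fixpoint PS (b : nat -> R -> R) (n : nat) (x : R) : R :=
  match n with O => 0 | S n' => PS b n' x + b n' x end.

Lemma isd_const (c x : R) : is_derive (fun _ => c) x 0.
Proof. auto_derive; auto. Qed.

Definition D0 (x : R) : Prop := -2 < x.

Lemma D0_open : open D0.
Proof. apply open_gt. Qed.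

Lemma D0_conn : is_connected D0.
Proof. intros a b x Ha Hb Hx. unfold D0 in *. lra. Qed.

Lemma B_der k j x : D0 x -> is_derive (B k j) x (B (S k) j x).
Proof.
  intros Hx. unfold D0 in Hx. unfold B.
  assert (H0 : 0 <= INR j) by apply pos_INR. rewrite S_INR.
  eapply isd_eq. apply (isd_mult (fun _ => e j)). apply isd_const.
  apply isd_plus. apply isd_minus. apply isd_minus.
  apply Psi_der_c; lra. apply Psi_der_c; lra. apply Psi_der_c; lra. apply Psi_der_c; lra.
  ring.
Qed.

Lemma PS_der (b b' : nat -> R -> R) (n : nat) (x : R) : (forall j, is_derive (b j) x (b' j x)) ->
  is_derive (PS b n) x (PS b' n x).
Proof.
  intros H. induction n as [|n IH]; simpl.
  - apply isd_const.
  - apply isd_plus; auto.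
Qed.

Lemma PSB_family n k y : D0 y ->
  Derive_n (PS (B 0%nat) n) k y = PS (B k) n y /\ ex_derive_n (PS (B 0%nat) n) k y.
Proof.
  intros Hy. apply (family D0 (fun k => PS (B k) n) D0_open); auto.
  intros k0 y0 Hy0. apply PS_der. intros j; apply B_der; auto.
Qed.

Lemma ln_sub1 y : 0 < y -> ln y <= y - 1.
Proof.
  intros Hy. rewrite <- (ln_exp (y - 1)). apply ln_le; auto.
  pose proof (exp_ineq1_le (y - 1)). lra.
Qed.

Lemma ln_diff a b : 0 < a -> a < b -> (b - a) / b <= ln b - ln a <= (b - a) / a.
Proof.
  intros Ha Hab. split.
  - assert (H := ln_sub1 (a / b)). rewrite ln_div in H by lra.
    assert (a / b - 1 = - ((b - a) / b)) by (field; lra).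
    assert (0 < a / b) by (apply Rdiv_lt_0_compat; lra). lra.
  - assert (H := ln_sub1 (b / a)). rewrite ln_div in H by lra.
    assert (b / a - 1 = (b - a) / a) by (field; lra).
    assert (0 < b / a) by (apply Rdiv_lt_0_compat; lra). lra.
Qed.

Lemma div_le_div a b q s : 0 < q -> 0 < s -> a * s <= b * q -> a / q <= b / s.
Proof.
  intros Hq Hs H.
  replace (a / q) with ((a * s) * / (q * s)) by (field; lra).
  replace (b / s) with ((b * q) * / (q * s)) by (field; lra).
  apply Rmult_le_compat_r; auto. left; apply Rinv_0_lt_compat; nra.
Qed.

Definition inner (k : nat) (A : R) : R :=
  Psi k A - Psi k (A + 1) - Psi k (A + 2) + Psi k (A + 3).

Lemma Psi1 t : 0 < t -> Psi 1 t = / t.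
Proof. intros; simpl; field; lra. Qed.

Lemma inner_bound k : exists C, 0 <= C /\ forall A, 2 <= A -> Rabs (inner k A) <= C / (A * A).
Proof.
  destruct k as [|[|i]].
  - exists 3. split. lra. intros A HA. unfold inner. simpl.
    destruct (ln_diff A (A + 1)) as [H1 H2]; try lra.
    destruct (ln_diff (A + 2) (A + 3)) as [H3 H4]; try lra.
    replace (A + 1 - A) with 1 in * by ring. replace (A + 3 - (A + 2)) with 1 in * by ring.
    assert (E1 : 1 / (A + 3) - 1 / A = - (3 / (A * (A + 3)))) by (field; lra).
    assert (E2 : 3 / (A * (A + 3)) <= 3 / (A * A)) by (apply div_le_div; nra).
    assert (E3 : 1 / (A + 2) <= 1 / (A + 1)) by (apply div_le_div; nra).
    assert (E4 : 0 <= 3 / (A * A)) by (unfold Rdiv; apply Rmult_le_pos; [lra| left; apply Rinv_0_lt_compat; nra]).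
    apply Rabs_le. lra.
  - exists 1. split. lra. intros A HA. unfold inner.
    rewrite !Psi1 by lra.
    assert (G1 : / A - / (A + 1) = / (A * (A + 1))) by (field; lra).
    assert (G2 : / (A + 2) - / (A + 3) = / ((A + 2) * (A + 3))) by (field; lra).
    assert (G3 : / ((A + 2) * (A + 3)) <= / (A * (A + 1))) by (apply Rinv_le_contravar; nra).
    assert (G4 : / (A * (A + 1)) <= 1 / (A * A)) by (unfold Rdiv; rewrite Rmult_1_l; apply Rinv_le_contravar; nra).
    assert (G5 : 0 <= / ((A + 2) * (A + 3))) by (left; apply Rinv_0_lt_compat; nra).
    apply Rabs_le. lra.
  - set (F := INR (fact (S i))).
    assert (HF : 0 <= F) by apply pos_INR.
    assert (Hp : forall t, 2 <= t -> Rabs (Psi (S (S i)) t) <= F / (t * t)).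
    { intros t Ht. unfold Psi. fold F. unfold Rdiv.
      rewrite !Rabs_mult, pow_1_abs, Rabs_inv, (Rabs_right F) by lra.
      rewrite (Rabs_right (t ^ S (S i))) by (left; apply pow_lt; lra).
      rewrite Rmult_1_l. apply Rmult_le_compat_l; auto. apply Rinv_le_contravar. nra.
      change (t ^ S (S i)) with (t * (t * t ^ i)).
      assert (1 <= t ^ i) by (apply pow_R1_Rle; lra). nra. }
    exists (4 * F). split. lra. intros A HA. unfold inner.
    assert (K : forall t, A <= t -> F / (t * t) <= F / (A * A)).
    { intros t Ht. assert (A * A <= t * t) by nra. apply div_le_div; [nra|nra|apply Rmult_le_compat_l; lra]. }
    pose proof (Hp A HA) as P0. pose proof (Hp (A + 1) ltac:(lra)) as P1.
    pose proof (Hp (A + 2) ltac:(lra)) as P2. pose proof (Hp (A + 3) ltac:(lra)) as P3.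
    pose proof (K (A + 1) ltac:(lra)). pose proof (K (A + 2) ltac:(lra)). pose proof (K (A + 3) ltac:(lra)).
    assert (F / (A * A) * 4 = 4 * F / (A * A)) by (field; lra).
    eapply Rle_trans. apply Rabs_triang. eapply Rle_trans. apply Rplus_le_compat_r. apply Rabs_triang.
    eapply Rle_trans. apply Rplus_le_compat_r. apply Rplus_le_compat_r. apply Rabs_triang.
    rewrite !Rabs_Ropp. lra.
Qed.

Lemma e_abs j : Rabs (e j) = 1.
Proof. unfold e. destruct (u_pm (2 * S j)) as [-> | ->]; simpl; unfold Rabs; destruct Rcase_abs; lra. Qed.

Lemma B_inner k j x : B k j x = e j * inner k (4 * INR (S j) + x).
Proof.
  unfold B, inner.
  replace (4 * INR (S j) + 1 + x) with (4 * INR (S j) + x + 1) by ring.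
  replace (4 * INR (S j) + 2 + x) with (4 * INR (S j) + x + 2) by ring.
  replace (4 * INR (S j) + 3 + x) with (4 * INR (S j) + x + 3) by ring.
  reflexivity.
Qed.

Lemma B_bound k : exists C, 0 <= C /\ forall j x, D0 x ->
  Rabs (B k j x) <= C / ((INR j + 1) * (INR j + 2)).
Proof.
  destruct (inner_bound k) as [C [HC H]]. exists C. split; auto.
  intros j x Hx. unfold D0 in Hx. rewrite B_inner, Rabs_mult, e_abs, Rmult_1_l.
  assert (Hj : 0 <= INR j) by apply pos_INR. rewrite S_INR.
  set (A := 4 * (INR j + 1) + x).
  assert (HA : 4 * INR j + 2 <= A) by (unfold A; lra).
  eapply Rle_trans. apply H. lra.
  assert ((INR j + 1) * (INR j + 2) <= A * A) by nra.
  apply div_le_div; [nra|nra|]. apply Rmult_le_compat_l; lra.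
Qed.

Lemma PS_tail (b : nat -> R -> R) C : 0 <= C ->
  (forall j x, D0 x -> Rabs (b j x) <= C / ((INR j + 1) * (INR j + 2))) ->
  forall m d x, D0 x ->
  Rabs (PS b (m + d) x - PS b m x) <= C * (1 / (INR m + 1) - 1 / (INR (m + d) + 1)).
Proof.
  intros HC Hb m d x Hx. induction d as [|d IH].
  - rewrite Nat.add_0_r. unfold Rminus. rewrite !Rplus_opp_r, Rabs_R0. lra.
  - rewrite Nat.add_succ_r. simpl PS.
    replace (PS b (m + d) x + b (m + d)%nat x - PS b m x) with
      ((PS b (m + d) x - PS b m x) + b (m + d)%nat x) by ring.
    eapply Rle_trans. apply Rabs_triang.
    pose proof (Hb (m + d)%nat x Hx) as H1.
    assert (H0 : 0 <= INR (m + d)) by apply pos_INR.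
    rewrite S_INR.
    assert (E : C * (1 / (INR m + 1) - 1 / (INR (m + d) + 1)) + C / ((INR (m + d) + 1) * (INR (m + d) + 2))
              = C * (1 / (INR m + 1) - 1 / (INR (m + d) + 1 + 1))).
    { assert (0 <= INR m) by apply pos_INR. field. lra. }
    lra.
Qed.

Lemma PS_cauchy (b : nat -> R -> R) C : 0 <= C ->
  (forall j x, D0 x -> Rabs (b j x) <= C / ((INR j + 1) * (INR j + 2))) ->
  CVU_cauchy (PS b) D0.
Proof.
  intros HC Hb eps. destruct (INR_archimed eps C) as [N HN]. apply cond_pos.
  exists N.
  assert (Key : forall n m x, D0 x -> (N <= m)%nat -> (m <= n)%nat -> Rabs (PS b n x - PS b m x) < eps).
  { intros n m x Hx Hm Hmn. replace n with (m + (n - m))%nat by lia.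
    eapply Rle_lt_trans. apply PS_tail; auto. exact HC.
    assert (0 <= INR (m + (n - m))) by apply pos_INR.
    assert (INR N <= INR m) by (apply le_INR; auto).
    assert (0 < / (INR (m + (n - m)) + 1)) by (apply Rinv_0_lt_compat; lra).
    assert (C * (1 / (INR m + 1)) <= C * (1 / (INR N + 1))).
    { assert (0 <= INR N) by apply pos_INR. apply Rmult_le_compat_l; auto. apply div_le_div; lra. }
    assert (C * (1 / (INR N + 1)) < eps).
    { assert (0 <= INR N) by apply pos_INR. pose proof (cond_pos eps).
      apply Rmult_lt_reg_r with (INR N + 1). lra.
      replace (C * (1 / (INR N + 1)) * (INR N + 1)) with C by (field; lra). nra. }
    assert (C * (1 / (INR (m + (n - m)) + 1)) >= 0).
    { unfold Rdiv. rewrite Rmult_1_l. apply Rle_ge, Rmult_le_pos; lra. }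
    rewrite Rmult_minus_distr_l. lra. }
  intros n m x Hx Hn Hm. destruct (le_lt_dec m n).
  - apply Key; auto.
  - rewrite Rabs_minus_sym. apply Key; auto. lia.
Qed.

Definition T (x : R) : R := Lim_seq (fun n => PS (B 0%nat) n x).

Lemma T_smooth : Sm D0 T.
Proof.
  apply (series_smooth D0 (fun n => PS (B 0%nat) n) D0_open D0_conn).
  - intros n k y Hy. apply PSB_family, Hy.
  - intros k. apply CVU_dom_cauchy. intros eps.
    destruct (B_bound k) as [C [HC HB]].
    destruct (PS_cauchy (B k) C HC HB eps) as [N HN]. exists N.
    intros n m x Hx Hn Hm. rewrite (proj1 (PSB_family n k x Hx)), (proj1 (PSB_family m k x Hx)).
    apply HN; auto.
Qed.

Lemma T_lim x : D0 x -> is_lim_seq (fun n => PS (B 0%nat) n x) (T x).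
Proof.
  intros Hx. destruct (B_bound 0) as [C [HC HB]].
  assert (H := CVU_CVS_dom _ _ (proj2 (CVU_dom_cauchy _ _) (PS_cauchy (B 0%nat) C HC HB)) x Hx).
  destruct H as [l Hl]. unfold T. rewrite (is_lim_seq_unique _ _ Hl). exact Hl.
Qed.

Definition ell (n : nat) (x : R) : R :=
  IZR (u n) * (ln (2 * INR n + x) - ln (2 * INR n + 1 + x)).

Lemma factor_exp n x : (1 <= n)%nat -> D0 x -> factor n x = exp (ell n x).
Proof.
  intros Hn Hx. unfold D0 in Hx. assert (H1 : 1 <= INR n) by (apply (le_INR 1); auto).
  unfold factor, ell. assert (Ha : 0 < 2 * INR n + x) by lra.
  assert (Hb : 0 < 2 * INR n + 1 + x) by lra.
  destruct (u_pm n) as [E|E]; rewrite E; simpl.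
  - rewrite Rmult_1_l, <- ln_div by lra. rewrite exp_ln. ring.
    apply Rdiv_lt_0_compat; lra.
  - replace (-1 * (ln (2 * INR n + x) - ln (2 * INR n + 1 + x))) with
      (ln (2 * INR n + 1 + x) - ln (2 * INR n + x)) by ring.
    rewrite <- ln_div by lra. rewrite exp_ln. field. split; lra.
    apply Rdiv_lt_0_compat; lra.
Qed.

Fixpoint Lsum (N : nat) (x : R) : R :=
  match N with O => 0 | S M => Lsum M x + ell (S M) x end.

Lemma pp_exp N x : D0 x -> partial_prod N x = exp (Lsum N x).
Proof.
  intros Hx. induction N as [|N IH]; simpl.
  - rewrite exp_0; reflexivity.
  - rewrite IH, exp_plus, factor_exp; auto. lia.
Qed.

Lemma Lsum_odd M x : Lsum (S (2 * M)) x = ell 1 x + PS (B 0%nat) M x.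
Proof.
  induction M as [|M IH].
  - simpl. ring.
  - replace (S (2 * S M)) with (S (S (S (2 * M)))) by lia.
    change (Lsum (S (S (S (2 * M)))) x) with
      (Lsum (S (2 * M)) x + ell (S (S (2 * M))) x + ell (S (S (S (2 * M)))) x).
    rewrite IH. simpl PS.
    assert (EB : B 0 M x = IZR (u (2 * S M)) * (ln (4 * INR (S M) + x) - ln (4 * INR (S M) + 1 + x)
       - ln (4 * INR (S M) + 2 + x) + ln (4 * INR (S M) + 3 + x))) by reflexivity.
    rewrite EB. unfold ell.
    replace (S (S (2 * M))) with (2 * S M)%nat by lia.
    rewrite u_odd. rewrite opp_IZR.
    replace (2 * INR (2 * S M) + x) with (4 * INR (S M) + x) by (rewrite mult_INR; simpl; ring).
    replace (2 * INR (2 * S M) + 1 + x) with (4 * INR (S M) + 1 + x) by (rewrite mult_INR; simpl; ring).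
    replace (2 * INR (S (2 * S M)) + x) with (4 * INR (S M) + 2 + x) by (rewrite ?S_INR, ?mult_INR, ?S_INR; simpl; ring).
    replace (2 * INR (S (2 * S M)) + 1 + x) with (4 * INR (S M) + 3 + x) by (rewrite ?S_INR, ?mult_INR, ?S_INR; simpl; ring).
    ring.
Qed.

Lemma ell_small n x : (2 <= n)%nat -> D0 x -> Rabs (ell n x) <= / INR n.
Proof.
  intros Hn Hx. unfold D0 in Hx. assert (H1 : 2 <= INR n) by (apply (le_INR 2); auto).
  unfold ell. rewrite Rabs_mult.
  assert (Hu : Rabs (IZR (u n)) = 1).
  { destruct (u_pm n) as [-> | ->]; simpl; unfold Rabs; destruct Rcase_abs; lra. }
  rewrite Hu, Rmult_1_l.
  destruct (ln_diff (2 * INR n + x) (2 * INR n + 1 + x)) as [_ H]; try lra.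
  replace (2 * INR n + 1 + x - (2 * INR n + x)) with 1 in H by ring.
  assert (0 < 1 / (2 * INR n + 1 + x)) by (apply Rdiv_lt_0_compat; lra).
  destruct (ln_diff (2 * INR n + x) (2 * INR n + 1 + x)) as [H' _]; try lra.
  assert (1 / (2 * INR n + x) <= / INR n).
  { unfold Rdiv. rewrite Rmult_1_l. apply Rinv_le_contravar; lra. }
  rewrite Rabs_minus_sym. rewrite Rabs_right; lra.
Qed.

Lemma Lsum_lim x : D0 x -> is_lim_seq (fun N => Lsum N x) (ell 1 x + T x).
Proof.
  intros Hx. apply is_lim_seq_Reals. intros eps Heps.
  pose proof (proj1 (is_lim_seq_Reals _ _) (T_lim x Hx)) as HT.
  destruct (HT (eps / 2)) as [N1 HN1]. lra.
  destruct (archimed_cor1 (eps / 2)) as [N2 [HN2 HN2']]. lra.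
  exists (2 * N1 + 2 * N2 + 2)%nat. intros n Hn. unfold R_dist.
  destruct (Nat.Even_or_Odd n) as [[M HM]|[M HM]].
  -
    destruct M as [|M]. lia.
    assert (En : n = S (S (2 * M))) by lia. rewrite En.
    change (Lsum (S (S (2 * M))) x) with (Lsum (S (2 * M)) x + ell (S (S (2 * M))) x).
    rewrite Lsum_odd.
    assert (A1 : Rabs (PS (B 0%nat) M x - T x) < eps / 2) by (apply HN1; lia).
    assert (A2 : Rabs (ell (S (S (2 * M))) x) <= / INR (S (S (2 * M)))) by (apply ell_small; auto; lia).
    assert (A3 : / INR (S (S (2 * M))) <= / INR N2).
    { apply Rinv_le_contravar. apply lt_0_INR; auto. apply le_INR. lia. }
    replace (ell 1 x + PS (B 0%nat) M x + ell (S (S (2 * M))) x - (ell 1 x + T x))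
      with ((PS (B 0%nat) M x - T x) + ell (S (S (2 * M))) x) by ring.
    eapply Rle_lt_trans. apply Rabs_triang. lra.
  - rewrite HM. replace (2 * M + 1)%nat with (S (2 * M)) by lia. rewrite Lsum_odd.
    replace (ell 1 x + PS (B 0%nat) M x - (ell 1 x + T x)) with (PS (B 0%nat) M x - T x) by ring.
    assert (Rabs (PS (B 0%nat) M x - T x) < eps / 2) by (apply HN1; lia). lra.
Qed.

Lemma h_eq x : D0 x -> h x = exp (ell 1 x + T x).
Proof.
  intros Hx. unfold h.
  rewrite (Lim_seq_ext _ (fun N => exp (Lsum N x))) by (intros; apply pp_exp; auto).
  rewrite (is_lim_seq_unique _ (exp (ell 1 x + T x))). reflexivity.
  apply is_lim_seq_continuous. apply derivable_continuous_pt, derivable_pt_exp.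
  apply Lsum_lim, Hx.
Qed.

Lemma ln_c_smooth c : 2 <= c -> Sm D0 (fun y => ln (c + y)).
Proof.
  intros Hc k y Hy.
  apply (family D0 (fun k y => Psi k (c + y)) D0_open).
  - intros k0 y0 Hy0. apply Psi_der_c. unfold D0 in Hy0. lra.
  - exact Hy.
Qed.

Lemma ell1_smooth : Sm D0 (ell 1).
Proof.
  unfold ell. apply Sm_mult. apply D0_open. apply Sm_const.
  apply Sm_minus. apply D0_open.
  apply ln_c_smooth. simpl; lra.
  apply (ln_c_smooth (2 * INR 1 + 1)). simpl; lra.
Qed.

Theorem theorem4 : forall (k : nat) (x : R), -2 < x -> ex_derive_n h k x.
Proof.
  intros k x Hx.
  apply ex_derive_n_ext_loc with (fun y => exp (ell 1 y + T y)).
  - apply (loc_eq D0). apply D0_open. exact Hx. intros y Hy. symmetry. apply h_eq, Hy.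
  - apply (Sm_exp D0 _ D0_open). apply Sm_plus. apply D0_open. apply ell1_smooth. apply T_smooth. exact Hx.
Qed.
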